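(* Let $\varphi$ be a DBI normal formula, let $k\ge1$ and $i_1,\dots,i_k\in\mathcal{A}$ with $i_j\neq i_{j+1}$ for all $j$, and let $\alpha_1,\dots,\alpha_k$ be the unique events of $\mathcal{U}_\varphi$ with $0\,Q^\varphi_{i_1}\alpha_1Q^\varphi_{i_2}\alpha_2\cdots Q^\varphi_{i_k}\alpha_k$. Then for every pointed Kripke model $(\mathcal{M},v)$: $\mathcal{M},v\vDash\widehat{B}_{i_1}\Bigl(\mathsf{pre}^\varphi(\alpha_1)\wedge\widehat{B}_{i_2}\bigl(\mathsf{pre}^\varphi(\alpha_2)\wedge\dots\widehat{B}_{i_k}\mathsf{pre}^\varphi(\alpha_k)\bigr)\Bigr)$ if and only if $\mathcal{M}\odot\mathcal{U}_\varphi,(v,0)\nvDash B_{i_1}\dots B_{i_k}\bot$.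
   Context: Agents $\mathcal{A}=\{1,\dots,n\}$, $n>1$; language $\mathcal{L}$: $\varphi ::= p \mid \neg\varphi \mid (\varphi\wedge\varphi)\mid B_i\varphi$, with $\top,\bot$ as usual and $\widehat{B}_i\varphi:=\neg B_i\neg\varphi$. Kripke model $\mathcal{M}=\langle S,R,V\rangle$ (nonempty $S$, $R_i\subseteq S\times S$, $V:\mathit{Prop}\to 2^S$), standard truth. Action model $\mathcal{U}=\langle E,Q,\mathsf{pre}\rangle$ (nonempty $E$, $Q_i\subseteq E\times E$, $\mathsf{pre}:E\to\mathcal{L}$). Pointed update of $(\mathcal{M},w)$ with $(\mathcal{U},\alpha)$, defined iff $\mathcal{M},w\vDash\mathsf{pre}(\alpha)$: with $T=\{(x,\beta)\in S\times E\mid\mathcal{M},x\vDash\mathsf{pre}(\beta)\}$, $\mathcal{M}\odot\mathcal{U}=\langle S^{\mathcal U},R^{\mathcal U},V^{\mathcal U}\rangle$ where $S^{\mathcal U}$ is the smallest subset of $T$ containing $(w,\alpha)$ closed under: $(x,\beta)\in S^{\mathcal U}$, $(u,\gamma)\in T$, $xR_iu$, $\beta Q_i\gamma$ imply $(u,\gamma)\in S^{\mathcal U}$; $R^{\mathcal U}_i$ relates $(x,\beta),(u,\gamma)\in S^{\mathcal U}$ iff $xR_iu$ and $\beta Q_i\gamma$; $V^{\mathcal U}(p)=\{(x,\beta)\in S^{\mathcal U}\mid x\in V(p)\}$. Target agents: $\mathsf{ta}(p)=\varnothing$, $\mathsf{ta}(\neg\phi)=\mathsf{ta}(\phi)$,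 $\mathsf{ta}(\phi\wedge\psi)=\mathsf{ta}(\phi)\cup\mathsf{ta}(\psi)$, $\mathsf{ta}(B_i\phi)=\{i\}$. DBI formulas: $\varphi ::= B_i\xi \mid B_i(\xi\wedge\varphi)\mid(\varphi\wedge\varphi)\mid B_i\varphi$, $\xi$ purely propositional. DBI normal: $B_i\xi$ always; $B_i\varphi$, $B_i(\xi\wedge\varphi)$ iff $\varphi$ DBI normal and $i\notin\mathsf{ta}(\varphi)$; $\varphi\wedge\psi$ iff both DBI normal and $\mathsf{ta}(\varphi)\cap\mathsf{ta}(\psi)=\varnothing$. Action model $\mathcal{U}_\varphi=\langle E^\varphi,Q^\varphi,\mathsf{pre}^\varphi\rangle$ for DBI normal $\varphi$, recursively; always $E^\varphi=\{0,-1\}\sqcup D^\varphi$, $\varnothing\ne D^\varphi\subseteq\{1,2,\dots\}$, $\mathsf{pre}^\varphi(0)=\mathsf{pre}^\varphi(-1)=\top$; $\underline{Q}_j:=Q_j\cap((E\setminus\{0\})\times(E\setminus\{0\}))$. (1) $\varphi=B_i\xi$: $D=\{m\}$, $\mathsf{pre}(m)=\xi$, $Q_j=\{(0,-1),(m,-1),(-1,-1)\}$ ($j\ne i$), $Q_i=\{(0,m),(m,m),(-1,-1)\}$. (2) $\varphi=B_i\psi$: fresh $m\ge1$, $m\notin D^\psi$; $D^\varphi=D^\psi\sqcup\{m\}$; $\mathsf{pre}^\varphi$ extends $\mathsf{pre}^\psi$ with $\mathsf{pre}^\varphi(m)=\top$; $Q^\varphi_j=\underline{Q}^\psi_j\cup\{(0,-1)\}\cup\{(m,k)\mid(0,k)\in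 Q^\psi_j\}$ ($j\ne i$); $Q^\varphi_i=\underline{Q}^\psi_i\cup\{(0,m),(m,m)\}$. (3) $\varphi=B_i(\xi\wedge\psi)$: as (2) but $\mathsf{pre}^\varphi(m)=\xi$. (4) $\varphi=\psi\wedge\theta$: with $D^\psi\cap D^\theta=\varnothing$, $D^\varphi=D^\psi\sqcup D^\theta$, $\mathsf{pre}^\varphi=\mathsf{pre}^\psi\cup\mathsf{pre}^\theta$, $Q^\varphi_j=\underline{Q}^\psi_j\cup\underline{Q}^\theta_j\cup\{(0,k)\mid(0,k)\in Q^\psi_j\cup Q^\theta_j, k\in D^\psi\sqcup D^\theta\}\cup\{(0,-1)\mid\text{no such }k\text{ exists}\}$. In $\mathcal{U}_\varphi$ every event has exactly one $Q^\varphi_j$-successor for each agent $j$. *)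

(* Defs.v *)
From mathcomp Require Import all_boot.
Set Implicit Arguments. Unset Strict Implicit. Unset Printing Implicit Defensive.

Section Logic.
Variable n : nat.
(* Agents {1,...,n} are represented by 'I_n = {0,...,n-1}. *)
Notation agent := 'I_n.

Inductive form : Type :=
| Var of nat
| Neg of form
| And of form & form
| Bel of agent & form.

Definition Top : form := Neg (And (Var 0) (Neg (Var 0))).
Definition Bot : form := Neg Top.
Definition hatB (i : agent) (f : form) : form := Neg (Bel i (Neg f)).

Record kmodel := KModel {
  st : Type;
  kR : agent -> st -> st -> Prop;
  kV : nat -> st -> Prop }.
Arguments kR : clear implicits.
Arguments kV : clear implicits.

Local Unset Implicit Arguments.
Fixpoint sat (M : kmodel) (s : st M) (f : form) : Prop :=
  match f with
  | Var p => kV M p s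
  | Neg g => ~ sat M s g
  | And g h => sat M s g /\ sat M s h
  | Bel i g => forall t, kR M i s t -> sat M t g
  end.

Local Set Implicit Arguments.
Lemma sat_Top (M : kmodel) (s : st M) : sat M s Top.
Proof. by move=> /= [H1 H2]. Qed.

Record amodel := AModel {
  evt : Type;
  aQ : agent -> evt -> evt -> Prop;
  apre : evt -> form }.
Arguments aQ : clear implicits.
Arguments apre : clear implicits.

Section Update.
Variables (M : kmodel) (U : amodel) (w : st M) (alpha : evt U).

Definition inT (p : st M * evt U) : Prop := sat M p.1 (apre U p.2).

Inductive reach : st M * evt U -> Prop :=
| reach0 : inT (w, alpha) -> reach (w, alpha)
| reachS (x u : st M) (b c : evt U) (i : agent) :
    reach (x, b) -> inT (u, c) -> kR M i x u -> aQ U i b c -> reach (u, c).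

Definition upd : kmodel :=
  {| st := {p : st M * evt U | reach p};
     kR := fun i a b => kR M i (sval a).1 (sval b).1 /\ aQ U i (sval a).2 (sval b).2;
     kV := fun p a => kV M p (sval a).1 |}.

Definition upd_pt (H : sat M w (apre U alpha)) : st upd :=
  exist _ (w, alpha) (reach0 H).
End Update.
Arguments upd : clear implicits.

Fixpoint ta (f : form) : {set agent} :=
  match f with
  | Var _ => set0
  | Neg g => ta g
  | And g h => ta g :|: ta h
  | Bel i _ => [set i]
  end.

Fixpoint isProp (f : form) : bool :=
  match f with
  | Var _ => true
  | Neg g => isProp g
  | And g h => isProp g && isProp h
  | Bel _ _ => false
  end.

(* DBI normal formulas (this predicate also enforces the DBI grammar) *)
Fixpoint dbi_normal (f : form) : Prop :=
  match f with
  | Bel i g =>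
      isProp g
      \/ (dbi_normal g /\ i \notin ta g)
      \/ (match g with
          | And xi psi => isProp xi /\ dbi_normal psi /\ i \notin ta psi
          | _ => False
          end)
  | And g h => dbi_normal g /\ dbi_normal h /\ [disjoint ta g & ta h]
  | _ => False
  end.

(* Events of U_phi: 0, -1, and positive integers k (ED k). *)
Inductive ev : Type := E0 | Em1 | ED of nat.

Record adata := AData {
  dD : seq nat;
  dQ : agent -> ev -> ev -> Prop;
  dpre : nat -> form }.

Definition underQ (Q : agent -> ev -> ev -> Prop) (j : agent) (x y : ev) : Prop :=
  Q j x y /\ x <> E0 /\ y <> E0.

Definition maxD (d : adata) : nat := foldr maxn 0 (dD d).

(* case (1): B_i xi, with m = 1 *)
Definition case1 (i : agent) (xi : form) : adata :=
  {| dD := [:: 1];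
     dQ := fun j x y =>
       if j == i then
         (x = E0 /\ y = ED 1) \/ (x = ED 1 /\ y = ED 1) \/ (x = Em1 /\ y = Em1)
       else
         (x = E0 /\ y = Em1) \/ (x = ED 1 /\ y = Em1) \/ (x = Em1 /\ y = Em1);
     dpre := fun k => if k == 1 then xi else Top |}.

(* cases (2) (xi = Top) and (3): fresh m = 1 + max D^psi *)
Definition caseB (i : agent) (xi : form) (d : adata) : adata :=
  let m := (maxD d).+1 in
  {| dD := m :: dD d;
     dQ := fun j x y =>
       if j == i then
         underQ (dQ d) j x y \/ (x = E0 /\ y = ED m) \/ (x = ED m /\ y = ED m)
       else
         underQ (dQ d) j x y \/ (x = E0 /\ y = Em1) \/ (x = ED m /\ dQ d j E0 y);
     dpre := fun k => if k == m then xi else dpre d k |}.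

Definition shev (s : nat) (e : ev) : ev :=
  match e with ED k => ED (s + k) | e => e end.

Definition shift (s : nat) (d : adata) : adata :=
  {| dD := map (addn s) (dD d);
     dQ := fun j x y => exists x0 y0, x = shev s x0 /\ y = shev s y0 /\ dQ d j x0 y0;
     dpre := fun k => if s < k then dpre d (k - s) else Top |}.

(* case (4): D^psi and (renamed) D^theta are disjoint *)
Definition caseAnd (d1 d2' : adata) : adata :=
  let d2 := shift (maxD d1) d2' in
  let D := dD d1 ++ dD d2 in
  {| dD := D;
     dQ := fun j x y =>
       underQ (dQ d1) j x y \/ underQ (dQ d2) j x y
       \/ (x = E0 /\ (exists k, y = ED k /\ k \in D /\ (dQ d1 j E0 y \/ dQ d2 j E0 y)))
       \/ (x = E0 /\ y = Em1 /\
           ~ (exists k, k \in D /\ (dQ d1 j E0 (ED k) \/ dQ d2 j E0 (ED k))));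
     dpre := fun k => if k \in dD d1 then dpre d1 k else dpre d2 k |}.

Definition junk : adata := {| dD := [:: 1]; dQ := fun _ _ _ => False; dpre := fun _ => Top |}.

(* U_phi (meaningful for DBI normal phi) *)
Fixpoint build (f : form) : adata :=
  match f with
  | Bel i g =>
      if isProp g then case1 i g
      else match g with
           | And xi psi => if isProp xi then caseB i xi (build psi)
                           else caseB i Top (build g)
           | _ => caseB i Top (build g)
           end
  | And g h => caseAnd (build g) (build h)
  | _ => junk
  end.

Definition inE (d : adata) (e : ev) : Prop :=
  match e with E0 => True | Em1 => True | ED k => k \in dD d end.

Definition Uphi (f : form) : amodel :=
  let d := build f in
  {| evt := {e : ev | inE d e};
     aQ := fun j a b => dQ d j (sval a) (sval b);
     apre := fun a => match sval a with ED k => dpre d k | _ => Top end |}.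

Definition ev0 (f : form) : evt (Uphi f) := exist _ E0 I.

Definition updPhi_pt (M : kmodel) (f : form) (v : st M) : st (upd M (Uphi f) v (ev0 f)) :=
  @upd_pt M (Uphi f) v (ev0 f) (@sat_Top M v).

Fixpoint qchain (U : amodel) (e : evt U) (ags : seq agent) (es : seq (evt U)) : Prop :=
  match ags, es with
  | [::], [::] => True
  | i :: ags', a :: es' => aQ U i e a /\ qchain a ags' es'
  | _, _ => False
  end.

Fixpoint alternating (l : seq agent) : Prop :=
  match l with
  | i :: ((j :: _) as l') => i != j /\ alternating l'
  | _ => True
  end.

Fixpoint dchain (l : seq (agent * form)) : form :=
  match l with
  | [::] => Top
  | [:: (i, p)] => hatB i p
  | (i, p) :: l' => hatB i (And p (dchain l'))
  end.

Definition boxes (ags : seq agent) (f : form) : form := foldr Bel f ags.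
End Logic.
Arguments sat {n}.
Arguments apre {n}.
Arguments aQ {n}.
Arguments kR {n}.
Arguments kV {n}.
Arguments upd {n}.

(* Main.v *)
Require Import Defs.
From mathcomp Require Import all_boot zify.
From Stdlib Require Import Classical ProofIrrelevance.
Set Implicit Arguments. Unset Strict Implicit.
Ltac crush := repeat match goal with
  | H : _ \/ _ |- _ => destruct H
  | H : _ /\ _ |- _ => destruct H
  | H : exists _, _ |- _ => destruct H
  | H : underQ _ _ _ _ |- _ => destruct H
  end; subst; try congruence.

Section Det.
Variable n : nat.
Implicit Types d : adata n.

Definition Inv d :=
  [/\ (forall j x y, dQ d j x y -> Defs.inE d x /\ Defs.inE d y),
      (forall k, k \in dD d -> 0 < k),
      (forall j y, dQ d j Em1 y -> y = Em1) &
      (forall j x, ~ dQ d j x E0)].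

Definition TA d (S : {set 'I_n}) := forall j k, dQ d j E0 (ED k) -> j \in S.

Definition Detm d := forall j x y y', dQ d j x y -> dQ d j x y' -> y = y'.

Lemma leq_maxD d k : k \in dD d -> k <= maxD d.
Proof.
rewrite /maxD; elim: (dD d) => [|a s IH] //=.
rewrite in_cons => /orP [/eqP ->|/IH H]; first exact: leq_maxl.
exact: (leq_trans H (leq_maxr _ _)).
Qed.

Lemma inE_sub d d' x : {subset dD d <= dD d'} -> Defs.inE d x -> Defs.inE d' x.
Proof. by case: x => //= k H /H. Qed.

Lemma case1_ok i xi : Inv (case1 i xi) /\ TA (case1 i xi) [set i] /\ Detm (case1 i xi).
Proof.
split; [split|split].
- move=> j x y /=; case: (j == i) => [|] [[-> ->]|[[-> ->]|[-> ->]]] //.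
all: try by move=> k; rewrite inE => /eqP ->.
all: try by move=> *.

- move=> j y /=; case: (j == i) => [|] [[//]|[[//]|[_ ->]]] //.
- move=> j x /=; case: (j == i) => [|] [[_ //]|[[_ //]|[_ //]]].
- move=> j k /=; case: eqP => [-> _|_]; first by rewrite inE.
  by case=> [[_ //]|[[//]|[//]]].
- move=> j x y y' /=; case: (j == i) => H1 H2; crush.
Qed.

Lemma notin_max d : ~ Defs.inE d (ED (maxD d).+1).
Proof. by move=> /= /leq_maxD; rewrite ltnn. Qed.

Lemma caseB_inv i xi d : Inv d -> Inv (caseB i xi d) /\ TA (caseB i xi d) [set i].
Proof.
case=> I1 I2 I3 I4.
have Hs : {subset dD d <= dD (caseB i xi d)} by move=> k Hk; rewrite /= in_cons Hk orbT.
have Hm : Defs.inE (caseB i xi d) (ED (maxD d).+1) by rewrite /= mem_head.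
split; [split|].
- move=> j x y /=; case: (j == i) => H; crush;
  (split; [|]; try done; apply: inE_sub Hs _;
   match goal with H : dQ d _ _ _ |- _ => have [? ?] := I1 _ _ _ H; done end).
- by move=> k; rewrite /= in_cons => /orP [/eqP ->|/I2].
- move=> j y /=; case: (j == i) => H; crush; match goal with H : dQ d _ _ _ |- _ => exact: (I3 _ _ H) end.
- move=> j x /=; case: (j == i) => H; crush; match goal with H : dQ d _ _ _ |- _ => exact: (I4 _ _ H) end.
- move=> j k /=; case: eqP => [-> _|_ H]; first by rewrite in_set1.
  crush.
Qed.

Lemma caseB_det i xi d : Inv d -> Detm d -> Detm (caseB i xi d).
Proof.
case=> I1 I2 I3 I4 D.
have Hm := @notin_max d.
move=> j x y y' /=; case: (j == i) => H1 H2; crush.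
all: first [ match goal with A : dQ _ ?j ?x ?y, B : dQ _ ?j ?x ?z |- ?y = ?z => exact: D _ _ _ _ A B end
           | match goal with A : dQ _ _ (ED _) _ |- _ => case: Hm; exact: (proj1 (I1 _ _ _ A)) end ].
Qed.

Lemma shev_inj s : injective (shev s).
Proof. by move=> [||a] [||b] //= [] /addnI ->. Qed.
Lemma shev_E0 s x : shev s x = E0 -> x = E0. Proof. by case: x. Qed.
Lemma shev_Em1 s x : shev s x = Em1 -> x = Em1. Proof. by case: x. Qed.
Lemma shev_ED s x k : shev s x = ED k -> exists k', x = ED k'.
Proof. by case: x => // k' _; exists k'. Qed.

Lemma shift_inv s d S : Inv d -> TA d S -> Inv (shift s d) /\ TA (shift s d) S.
Proof.
case=> I1 I2 I3 I4 T.
split; [split|].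
- move=> j x y /= [x0 [y0 [-> [-> H]]]].
  have [] := I1 _ _ _ H; case: x0 {H} => [||a] //=; case: y0 => [||b] //=;
  by move=> *; rewrite ?map_f.
- by move=> k /= /mapP [k0 /I2 H ->]; rewrite addn_gt0 H orbT.
- move=> j y /= [x0 [y0 [/esym/shev_Em1 -> [-> H]]]].
  by rewrite (I3 _ _ H).
- move=> j x /= [x0 [y0 [_ [/esym/shev_E0 E H]]]]; subst y0; exact: (I4 _ _ H).
- move=> j k /= [x0 [y0 [/esym/shev_E0 -> [/esym/shev_ED [k' ->] H]]]].
  exact: (T _ _ H).
Qed.

Lemma shift_det s d : Detm d -> Detm (shift s d).
Proof.
move=> D j x y y' /= [x0 [y0 [-> [-> H]]]] [x1 [y1 [/shev_inj E [-> H']]]].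
subst x1; by rewrite (D _ _ _ _ H H').
Qed.

Lemma disj_contra (S1 S2 : {set 'I_n}) j :
  [disjoint S1 & S2] -> j \in S1 -> j \in S2 -> False.
Proof.
move/disjoint_setI0 => H H1 H2.
by have := in_set0 j; rewrite -H inE H1 H2.
Qed.

Definition cAnd (d1 d2 : adata n) : adata n :=
  let D := dD d1 ++ dD d2 in
  {| dD := D;
     dQ := fun j x y =>
       underQ (dQ d1) j x y \/ underQ (dQ d2) j x y
       \/ (x = E0 /\ (exists k, y = ED k /\ k \in D /\ (dQ d1 j E0 y \/ dQ d2 j E0 y)))
       \/ (x = E0 /\ y = Em1 /\
           ~ (exists k, k \in D /\ (dQ d1 j E0 (ED k) \/ dQ d2 j E0 (ED k))));
     dpre := fun k => if k \in dD d1 then dpre d1 k else dpre d2 k |}.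

Lemma cAnd_inv d1 d2 S1 S2 : Inv d1 -> TA d1 S1 -> Inv d2 -> TA d2 S2 ->
  Inv (cAnd d1 d2) /\ TA (cAnd d1 d2) (S1 :|: S2).
Proof.
move=> Ia T1 Ib T2.
case: Ia => I1 I2 I3 I4; case: Ib => J1 J2 J3 J4.
have Hs1 : {subset dD d1 <= dD (cAnd d1 d2)} by move=> k Hk; rewrite /= mem_cat Hk.
have Hs2 : {subset dD d2 <= dD (cAnd d1 d2)} by move=> k Hk; rewrite /= mem_cat Hk orbT.
split; [split|].
- move=> j x y /= H; crush; try done;
  match goal with A : dQ _ _ _ _ |- _ =>
   first [ have [? ?] := I1 _ _ _ A; split; exact: inE_sub Hs1 _
         | have [? ?] := J1 _ _ _ A; split; exact: inE_sub Hs2 _ ] end.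
- by move=> k; rewrite /= mem_cat => /orP [/I2|/J2].
- move=> j y /= H; crush; match goal with A : dQ _ _ Em1 _ |- _ => first [exact: (I3 _ _ A) | exact: (J3 _ _ A)] end.
- move=> j x /= H; crush.
- move=> j k /= H; crush; rewrite inE; match goal with A : dQ _ _ E0 _ |- _ => first [by rewrite (T1 _ _ A) | by rewrite (T2 _ _ A) orbT] end.
Qed.

Lemma cAnd_det d1 d2 S1 S2 : Inv d1 -> TA d1 S1 -> Inv d2 -> TA d2 S2 ->
  Detm d1 -> Detm d2 -> [disjoint S1 & S2] ->
  (forall k, k \in dD d1 -> k \in dD d2 -> False) -> Detm (cAnd d1 d2).
Proof.
move=> Ia T1 Ib T2 D1 D2 Hdis HD.
case: Ia => I1 I2 I3 I4; case: Ib => J1 J2 J3 J4.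
have cross : forall j x y y', dQ d1 j x y -> dQ d2 j x y' -> x <> E0 -> y = y'.
  move=> j [||k] y y' A B // _.
  - by rewrite (I3 _ _ A) (J3 _ _ B).
  - have [/= Hk _] := I1 _ _ _ A.
    have [/= Hk' _] := J1 _ _ _ B.
    by case: (HD _ Hk Hk').
move=> j x y y' /= H1 H2; crush;
  first [ by eapply D1; eauto | by eapply D2; eauto | by eapply cross; eauto
        | by apply: esym; eapply cross; eauto
        | by exfalso; apply: (disj_contra Hdis); [eapply T1 | eapply T2]; eauto
        | by exfalso; apply: (disj_contra Hdis); [eapply T2 | eapply T1]; eauto
        | by exfalso; match goal with N : ~ (exists k, _) |- _ => apply: N end;
             eexists; split; [eassumption | first [by left | by right]] ].
Qed.

Lemma caseAnd_ok d1 d2' S1 S2 : Inv d1 -> TA d1 S1 -> Inv d2' -> TA d2' S2 ->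
  Inv (caseAnd d1 d2') /\ TA (caseAnd d1 d2') (S1 :|: S2) /\
  (Detm d1 -> Detm d2' -> [disjoint S1 & S2] -> Detm (caseAnd d1 d2')).
Proof.
move=> Ia T1 Ib' T2'.
have [Ib T2] := shift_inv (maxD d1) Ib' T2'.
have D2 := @shift_det (maxD d1) d2'.
change (caseAnd d1 d2') with (cAnd d1 (shift (maxD d1) d2')).
have [Ic Tc] := cAnd_inv Ia T1 Ib T2.
split=> //; split=> // D1 D2' Hdis.
apply: (cAnd_det Ia T1 Ib T2 D1 (D2 D2') Hdis).
move=> k /leq_maxD Hk /= /mapP [k0 Hk0 E].
case: Ib' => _ K2 _ _; have := K2 _ Hk0.
move: Hk; rewrite E; lia.
Qed.

Lemma isProp_not_dbi (f : form n) : isProp f -> ~ dbi_normal f.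
Proof.
elim: f => [p|g _|g IHg h _|i g _] /=; try done; try by move=> _ [].
by move=> /andP [Hg _] [Hdg _]; exact: IHg.
Qed.

Definition P (f : form n) :=
  Inv (build f) /\ TA (build f) (ta f) /\ (dbi_normal f -> Detm (build f)).

Lemma junk_ok (f : form n) : build f = junk n -> P f.
Proof.
move=> E; rewrite /P E; split; [split|split] => //.
all: try by move=> k; rewrite inE => /eqP ->.
all: try by move=> *.

Qed.

Lemma build_ok (f : form n) : P f /\ (forall g h, f = And g h -> P h).
Proof.
elim: f => [p|g [IH _]|g [IHg _] h [IHh _]|i g [IHg IHg2]].
- by split=> [|? ? //]; apply: junk_ok.
- by split=> [|? ? //]; apply: junk_ok.
- split=> [|? ? [_ <-] //].
  case: IHg => Ig [Tg Dg]; case: IHh => Ih [Th Dh].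
  have [Ic [Tc Dc]] := caseAnd_ok Ig Tg Ih Th.
  rewrite /P /=; split=> //; split=> //.
  by case=> Hg [Hh Hd]; apply: Dc; [apply: Dg|apply: Dh|].
- split=> [|? ? //].
  rewrite /P /=.
  case Hp: (isProp g).
  + by have [? [? ?]] := case1_ok i g; split; [|split] => // _.
  + have gen : forall xi d (Q : Prop), Inv d -> (Q -> Detm d) ->
        Inv (caseB i xi d) /\ TA (caseB i xi d) [set i] /\
        (Q -> Detm (caseB i xi d)).
      move=> xi d Q Id Dd; have [? ?] := caseB_inv i xi Id.
      split=> //; split=> // Hn; exact: caseB_det Id (Dd Hn).
    case: IHg => Ig [Tg Dg].
    case: g Hp IHg2 Ig Tg Dg => [p|g0|xi psi|j g0] Hp IHg2 Ig Tg Dg //.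
    * apply: gen => // -[Hf|[[Hn _]|[]]]; [done|exact: Dg].
    * case Hx: (isProp xi).
      - have [Ip [Tp Dp]] := IHg2 _ _ erefl.
        apply: gen => // -[Hf|[[[Hn _] _]|[_ [Hn _]]]]; first done.
        + by case: (isProp_not_dbi Hx Hn).
        + exact: Dp.
      - apply: gen => // -[Hf|[[Hn _]|[Hx' _]]]; [done|exact: Dg|by rewrite Hx' in Hx].
    * apply: gen => // -[Hf|[[Hn _]|[]]]; [done|exact: Dg].
Qed.
End Det.

Section Gen.
Variable n : nat.

Lemma sat_Bot (M : kmodel n) s : ~ sat M s (Bot n).
Proof. by move=> /= H; apply: H; apply: sat_Top. Qed.

Lemma reach_inT (M : kmodel n) (U : amodel n) w alpha p :
  reach w alpha p -> inT (M:=M) (U:=U) p.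
Proof. by case. Qed.

Lemma notall_ex (T : Type) (P Q : T -> Prop) :
  (~ forall t, P t -> ~ Q t) <-> exists t, P t /\ Q t.
Proof.
split.
- move=> H; apply: NNPP => H2; apply: H => t Pt Qt; apply: H2; by exists t.
- by case=> t [Pt Qt] H; exact: H t Pt Qt.
Qed.

Variables (U : amodel n)
  (Hdet : forall i a b c, aQ U i a b -> aQ U i a c -> b = c).
Variables (M : kmodel n) (w : st M) (alpha : evt U).

Lemma sat_hatB (K : kmodel n) x i f :
  sat K x (hatB i f) <-> exists t, kR K i x t /\ sat K t f.
Proof. exact: notall_ex. Qed.

Lemma nsat_Bel (K : kmodel n) x i f :
  ~ sat K x (Bel i f) <-> exists t, kR K i x t /\ ~ sat K t f.
Proof.
split.
- move=> H; apply: NNPP => H2; apply: H => t Ht; apply: NNPP => H3; apply: H2; by exists t.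
- by case=> t [Ht Hn] H; apply: Hn; apply: H.
Qed.

Lemma key (ags : seq 'I_n) : forall i (es : seq (evt U)) (s : st (upd M U w alpha)),
  qchain (sval s).2 (i :: ags) es ->
  sat M (sval s).1 (dchain (zip (i :: ags) (map (apre U) es)))
  <-> ~ sat (upd M U w alpha) s (boxes (i :: ags) (Bot n)).
Proof.
elim: ags => [|j ags IH] i es s.
- case: es => [|a [|b es]]; [by []| |by case=> _ []].
  case=> Hq _.
  change (sat M (sval s).1 (hatB i (apre U a)) <-> ~ sat (upd M U w alpha) s (Bel i (Bot n))).
  rewrite sat_hatB nsat_Bel; split.
  + case=> t [Hr Hp].
    have Hre : reach w alpha (t, a).
      case: s Hq Hr => [[x e] Hs] /= Hq Hr.
      exact: (reachS Hs Hp Hr Hq).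
    exists (exist _ (t, a) Hre); split => //; exact: sat_Bot.
  + case=> [[[t b] Hs]] /= [[Hr Hb] _].
    have Hab := Hdet Hq Hb; subst b.
    exists t; split => //; exact: (reach_inT Hs).
- case: es => [|a [|b es]]; [by []|by case=> _ []|].
  case=> Hq Hc.
  change (sat M (sval s).1 (hatB i (And (apre U a) (dchain (zip (j :: ags) (map (apre U) (b :: es))))))
     <-> ~ sat (upd M U w alpha) s (Bel i (boxes (j :: ags) (Bot n)))).
  rewrite sat_hatB nsat_Bel; split.
  + case=> t [Hr [Hp Hd]].
    have Hre : reach w alpha (t, a).
      case: s Hq Hr {Hc} => [[x e] Hs] /= Hq Hr.
      exact: (reachS Hs Hp Hr Hq).
    exists (exist _ (t, a) Hre); split => //.
    by apply/(IH j (b :: es) (exist _ (t, a) Hre)).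
  + case=> [[[t b'] Hs]] /= [[Hr Hb] Hn].
    have Hab := Hdet Hq Hb; subst b'.
    exists t; split => //; split; first exact: (reach_inT Hs).
    by apply/(IH j (b :: es) (exist _ (t, a) Hs)).
Qed.
End Gen.

Lemma Uphi_det (n : nat) (phi : form n) : dbi_normal phi ->
  forall i (a b c : evt (Uphi phi)), aQ (Uphi phi) i a b -> aQ (Uphi phi) i a c -> b = c.
Proof.
move=> Hn i a [b Hb] [c Hc] /= H1 H2.
have [_ [_ D]] := (proj1 (build_ok phi)).
have E := D Hn _ _ _ _ H1 H2; subst c.
by rewrite (proof_irrelevance _ Hb Hc).
Qed.

Theorem theorem6 (n : nat) (hn : 1 < n) (phi : form n) (Hphi : dbi_normal phi)
  (ags : seq 'I_n) (es : seq (evt (Uphi phi)))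
  (Hk : 0 < size ags) (Halt : alternating ags)
  (Hch : qchain (ev0 phi) ags es)
  (M : kmodel n) (v : st M) :
  sat M v (dchain (zip ags (map (apre (Uphi phi)) es)))
  <-> ~ sat (upd M (Uphi phi) v (ev0 phi)) (updPhi_pt phi v) (boxes ags (Bot n)).
Proof.
case: ags Hk Halt Hch => [|i ags] // _ _ Hch.
have := @key n (Uphi phi) (Uphi_det Hphi) M v (ev0 phi) ags i es (updPhi_pt phi v) Hch. move=> H. exact: H.
Qed.
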